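(* For every strongly normalising $\lambda\mu$-term $M$ there exist a basis $\Gamma$, a name context $\Delta$ and a type $\delta\in\mathcal{T}_D$ such that $\Gamma\vdash M:\delta\mid\Delta$ is derivable in the intersection type system described in the context.
   Context: $\lambda\mu$-calculus (Parigot). Fix disjoint denumerable sets of term variables $x,y,\dots$ and names $\alpha,\beta,\dots$. Terms and commands: $M,N ::= x \mid \lambda x.M \mid MN \mid \mu\alpha.C$ and $C ::= [\alpha]M$; $\lambda$ binds $x$, $\mu$ binds $\alpha$; terms are taken up to renaming of bound variables/names, with bound and free variables/names assumed distinct. $M[N/x]$ is capture-avoiding substitution. Structural substitution $T[\alpha \Leftarrow L]$ ($T$ a term or command): $([\alpha]M)[\alpha\Leftarrow L] = [\alpha](M[\alpha\Leftarrow L])L$; $([\beta]M)[\alpha\Leftarrow L]=[\beta](M[\alpha\Leftarrow L])$ if $\beta\neq\alpha$; $(\mu\beta.C)[\alpha\Leftarrow L]=\mu\beta.(C[\alpha\Leftarrow L])$; $x[\alpha\Leftarrow L]=x$; $(\lambda x.M)[\alpha\Leftarrow L]=\lambda x.(M[\alpha\Leftarrow L])$; $(MN)[\alpha\Leftarrow L]=(M[\alpha\Leftarrow L])(N[\alpha\Leftarrow L])$. Reduction $\to$ is the compatible closure of $(\lambda x.M)N \to M[N/x]$ and $(\mu\beta.C)N \to \mu\beta.(C[\beta\Leftarrow N])$. A term is strongly normalising if it admits no infinite reduction sequence. Types. With a single type constant $\nu$ and a symbol $\omega$ (which is not itself a type): $\mathcal{T}_D:\ \delta ::= \nu \mid \omega\to\nu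 \mid \kappa\to\nu \mid \delta\wedge\delta$; $\mathcal{T}_C:\ \kappa ::= \delta\times\omega \mid \delta\times\kappa \mid \kappa\wedge\kappa$ ($\times$ associates to the right). The relations $\le$ on $\mathcal{T}_D$ and on $\mathcal{T}_C$ are the least preorders such that: $\sigma\wedge\tau\le\sigma$; $\sigma\wedge\tau\le\tau$; $\nu\le\omega\to\nu$; $\omega\to\nu\le\nu$; $\delta_1\times\delta_2\times\omega\le\delta_1\times\omega$; $(\delta_1\times\omega)\wedge(\delta_2\times\kappa)\le(\delta_1\wedge\delta_2)\times\kappa$; $(\delta_1\times\kappa_1)\wedge(\delta_2\times\kappa_2)\le(\delta_1\wedge\delta_2)\times(\kappa_1\wedge\kappa_2)$; if $\delta_1\le\delta_2$ then $\delta_1\times\omega\le\delta_2\times\omega$; if $\delta_1\le\delta_2$ and $\kappa_1\le\kappa_2$ then $\delta_1\times\kappa_1\le\delta_2\times\kappa_2$; if $\sigma\le\tau_1$ and $\sigma\le\tau_2$ then $\sigma\le\tau_1\wedge\tau_2$; if $\kappa_2\le\kappa_1$ then $\kappa_1\to\nu\le\kappa_2\to\nu$. Typing. A basis $\Gamma$ is a finite map from term variables to $\mathcal{T}_D$, a name context $\Delta$ a finite map from names to $\mathcal{T}_C$; judgements are $\Gamma\vdash M:\delta\mid\Delta$, with the convention that variables of $\Gamma$ and names of $\Delta$ do not occur bound in $M$. Rules: (ax) $\Gamma,x{:}\delta\vdash x:\delta\mid\Delta$; (abs) from $\Gamma,x{:}\delta\vdash M:\kappa\to\nu\mid\Delta$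 infer $\Gamma\vdash\lambda x.M:\delta\times\kappa\to\nu\mid\Delta$; (app) from $\Gamma\vdash M:\delta\times\kappa\to\nu\mid\Delta$ and $\Gamma\vdash N:\delta\mid\Delta$ infer $\Gamma\vdash MN:\kappa\to\nu\mid\Delta$ (in (abs) and (app), $\kappa$ is either in $\mathcal{T}_C$ or is $\omega$); ($\mu$) from $\Gamma\vdash M:\kappa'\to\nu\mid\alpha{:}\kappa,\beta{:}\kappa',\Delta$ infer $\Gamma\vdash\mu\alpha.[\beta]M:\kappa\to\nu\mid\beta{:}\kappa',\Delta$ (for $\beta\ne\alpha$), and from $\Gamma\vdash M:\kappa\to\nu\mid\alpha{:}\kappa,\Delta$ infer $\Gamma\vdash\mu\alpha.[\alpha]M:\kappa\to\nu\mid\Delta$; ($\le$) from $\Gamma\vdash M:\delta\mid\Delta$ and $\delta\le\delta'$ infer $\Gamma\vdash M:\delta'\mid\Delta$; ($\wedge$) from $\Gamma\vdash M:\delta\mid\Delta$ and $\Gamma\vdash M:\delta'\mid\Delta$ infer $\Gamma\vdash M:\delta\wedge\delta'\mid\Delta$. *)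

(* Defs.v *)
From Stdlib Require Import Arith List.
Import ListNotations.

(* Term variables and names are two independent de Bruijn index
   spaces.  [Lam M] binds term variable 0 in M; [Mu b M] is mu alpha.[b]M,
   where the mu binds name 0 in the command [b]M (so b = 0 means the
   command name is the bound alpha). *)
Inductive term : Type :=
| Var : nat -> term
| Lam : term -> term
| App : term -> term -> term
| Mu  : nat -> term -> term.

Fixpoint lift_t (k : nat) (M : term) : term :=
  match M with
  | Var n => Var (if n <? k then n else S n)
  | Lam P => Lam (lift_t (S k) P)
  | App P Q => App (lift_t k P) (lift_t k Q)
  | Mu b P => Mu b (lift_t k P)
  end.

Fixpoint lift_n (k : nat) (M : term) : term :=
  match M with
  | Var n => Var n
  | Lam P => Lam (lift_n k P)
  | App P Q => App (lift_n k P) (lift_n k Q)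
  | Mu b P => Mu (if b <? S k then b else S b) (lift_n (S k) P)
  end.

(* capture-avoiding substitution M[N/k] (removing variable k) *)
Fixpoint subst_t (k : nat) (N M : term) : term :=
  match M with
  | Var n => if n =? k then N else if n <? k then Var n else Var (pred n)
  | Lam P => Lam (subst_t (S k) (lift_t 0 N) P)
  | App P Q => App (subst_t k N P) (subst_t k N Q)
  | Mu b P => Mu b (subst_t k (lift_n 0 N) P)
  end.

(* structural substitution M[k <= N]: every command [k]P becomes [k](P')N *)
Fixpoint ssubst (k : nat) (N M : term) : term :=
  match M with
  | Var n => Var n
  | Lam P => Lam (ssubst k (lift_t 0 N) P)
  | App P Q => App (ssubst k N P) (ssubst k N Q)
  | Mu b P =>
      let N' := lift_n 0 N in
      let P' := ssubst (S k) N' P in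
      if b =? S k then Mu b (App P' N') else Mu b P'
  end.

Inductive step : term -> term -> Prop :=
| st_beta : forall M N, step (App (Lam M) N) (subst_t 0 N M)
| st_mu : forall b P N,
    step (App (Mu b P) N)
         (let N' := lift_n 0 N in
          let P' := ssubst 0 N' P in
          if b =? 0 then Mu b (App P' N') else Mu b P')
| st_lam : forall M M', step M M' -> step (Lam M) (Lam M')
| st_appl : forall M M' N, step M M' -> step (App M N) (App M' N)
| st_appr : forall M N N', step N N' -> step (App M N) (App M N')
| st_mu_body : forall b M M', step M M' -> step (Mu b M) (Mu b M').

Definition SN (M : term) : Prop :=
  ~ exists f : nat -> term, f 0 = M /\ forall n, step (f n) (f (S n)).

Inductive tD : Type :=
| Nu : tD
| OmArr : tD                   (* omega -> nu *)
| KArr : tC -> tD              (* kappa -> nu *)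
| DAnd : tD -> tD -> tD
with tC : Type :=
| PairO : tD -> tC             (* delta x omega *)
| Pair : tD -> tC -> tC        (* delta x kappa *)
| CAnd : tC -> tC -> tC.

(* "kappa in T_C or omega" is encoded as option tC (None = omega) *)
Definition arr (ko : option tC) : tD :=
  match ko with None => OmArr | Some k => KArr k end.
Definition times (d : tD) (ko : option tC) : tC :=
  match ko with None => PairO d | Some k => Pair d k end.

Inductive leD : tD -> tD -> Prop :=
| leD_refl : forall d, leD d d
| leD_trans : forall d1 d2 d3, leD d1 d2 -> leD d2 d3 -> leD d1 d3
| leD_andl : forall s t, leD (DAnd s t) s
| leD_andr : forall s t, leD (DAnd s t) t
| leD_nu_om : leD Nu OmArr
| leD_om_nu : leD OmArr Nu
| leD_glb : forall s t1 t2, leD s t1 -> leD s t2 -> leD s (DAnd t1 t2)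
| leD_arr : forall k1 k2, leC k2 k1 -> leD (KArr k1) (KArr k2)
with leC : tC -> tC -> Prop :=
| leC_refl : forall k, leC k k
| leC_trans : forall k1 k2 k3, leC k1 k2 -> leC k2 k3 -> leC k1 k3
| leC_andl : forall s t, leC (CAnd s t) s
| leC_andr : forall s t, leC (CAnd s t) t
| leC_drop : forall d1 d2, leC (Pair d1 (PairO d2)) (PairO d1)
| leC_andO : forall d1 d2 k,
    leC (CAnd (PairO d1) (Pair d2 k)) (Pair (DAnd d1 d2) k)
| leC_andP : forall d1 d2 k1 k2,
    leC (CAnd (Pair d1 k1) (Pair d2 k2)) (Pair (DAnd d1 d2) (CAnd k1 k2))
| leC_PairO : forall d1 d2, leD d1 d2 -> leC (PairO d1) (PairO d2)
| leC_Pair : forall d1 d2 k1 k2,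
    leD d1 d2 -> leC k1 k2 -> leC (Pair d1 k1) (Pair d2 k2)
| leC_glb : forall s t1 t2, leC s t1 -> leC s t2 -> leC s (CAnd t1 t2).

(* Bases and name contexts: finite partial maps, represented positionally
   (index i of the list = de Bruijn index i; None = not in the domain). *)
Definition basis := list (option tD).
Definition nctx := list (option tC).

Inductive typ : basis -> term -> tD -> nctx -> Prop :=
| t_ax : forall G D x d, nth x G None = Some d -> typ G (Var x) d D
| t_abs : forall G D M d ko,
    typ (Some d :: G) M (arr ko) D -> typ G (Lam M) (KArr (times d ko)) D
| t_app : forall G D M N d ko,
    typ G M (KArr (times d ko)) D -> typ G N d D -> typ G (App M N) (arr ko) D
| t_mu1 : forall G D M b k k',
    nth b D None = Some k' ->
    typ G M (KArr k') (Some k :: D) -> typ G (Mu (S b) M) (KArr k) D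
| t_mu2 : forall G D M k,
    typ G M (KArr k) (Some k :: D) -> typ G (Mu 0 M) (KArr k) D
| t_le : forall G D M d d', typ G M d D -> leD d d' -> typ G M d' D
| t_and : forall G D M d d',
    typ G M d D -> typ G M d' D -> typ G M (DAnd d d') D.

(* Main.v *)
Require Import Defs.
From Stdlib Require Import Arith List Lia Classical ClassicalEpsilon Relations Transitive_Closure.
Import ListNotations.

Definition oext {X} (le : X -> X -> Prop) (x' x : option X) : Prop :=
  forall a, x = Some a -> exists a', x' = Some a' /\ le a' a.
Definition ext {X} (le : X -> X -> Prop) (G' G : list (option X)) : Prop :=
  forall i, oext le (nth i G' None) (nth i G None).

Definition mo {X} (f : X -> X -> X) (x y : option X) : option X :=
  match x, y with
  | Some a, Some b => Some (f a b)
  | Some a, None => Some a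
  | None, y => y end.

Fixpoint merge {X} (f : X -> X -> X) (l1 l2 : list (option X)) : list (option X) :=
  match l1, l2 with
  | [], l => l
  | x :: l1', [] => x :: l1'
  | x :: l1', y :: l2' => mo f x y :: merge f l1' l2' end.

Fixpoint ins {X} (k : nat) (o : option X) (l : list (option X)) :=
  match k, l with
  | 0, l => o :: l
  | S k, [] => None :: ins k o []
  | S k, x :: l => x :: ins k o l end.
Fixpoint upd {X} k (o : option X) (l : list (option X)) :=
  match k, l with
  | 0, [] => [o] | 0, _ :: l => o :: l
  | S k, [] => None :: upd k o [] | S k, x :: l => x :: upd k o l end.
Fixpoint del {X} k (l : list X) := match k, l with
  | 0, l => tl l | S k, [] => [] | S k, x :: l => x :: del k l end.

Lemma nth_nil_none {X} i : nth i (@nil (option X)) None = None.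
Proof. destruct i; reflexivity. Qed.

Lemma nth_merge {X} f (l1 l2 : list (option X)) i :
  nth i (merge f l1 l2) None = mo f (nth i l1 None) (nth i l2 None).
Proof.
  revert l2 i; induction l1 as [|x l1 IH]; intros [|y l2] [|i]; simpl;
    rewrite ?nth_nil_none; auto; destruct x; auto.
  all: destruct (nth i l1 None); auto.
Qed.

Lemma nth_ins {X} k (o : option X) l i :
  nth i (ins k o l) None = if i <? k then nth i l None else if i =? k then o else nth (pred i) l None.
Proof.
  revert o l i; induction k; intros o l [|i]; destruct l; simpl; auto.
  all: rewrite IHk; change (S i <? S k) with (i <? k).
  all: destruct (i <? k) eqn:E1; rewrite ?nth_nil_none; auto;
       destruct (i =? k) eqn:E2; auto; destruct i; auto;
       apply Nat.ltb_ge in E1; apply Nat.eqb_neq in E2; lia.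
Qed.

Lemma nth_upd {X} k (o : option X) l i :
  nth i (upd k o l) None = if i =? k then o else nth i l None.
Proof.
  revert o l i; induction k; intros o l i; destruct l, i; simpl; auto; try apply nth_nil_none;
  rewrite IHk; auto; rewrite ?nth_nil_none; destruct (i =? k); auto.
Qed.
Lemma nth_del {X} k (l : list (option X)) i :
  nth i (del k l) None = nth (if i <? k then i else S i) l None.
Proof.
  revert l i; induction k; intros l i; destruct l, i; simpl; auto; try apply nth_nil_none.
  all: change (S i <? S k) with (i <? k).
  - destruct (i <? k); auto.
  - rewrite IHk; destruct (i <? k); auto.
Qed.

Section Ext.
Context {X : Type} (le : X -> X -> Prop) (f : X -> X -> X)
  (le_refl : forall a, le a a) (le_trans : forall a b c, le a b -> le b c -> le a c)
  (le_fl : forall a b, le (f a b) a) (le_fr : forall a b, le (f a b) b).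

Lemma oext_refl x : oext le x x.
Proof. intros a ->; eauto. Qed.
Lemma oext_trans x y z : oext le x y -> oext le y z -> oext le x z.
Proof. intros H1 H2 a Ha. destruct (H2 a Ha) as [b [Hb Hl]]. destruct (H1 b Hb) as [c [Hc Hl']]. eauto. Qed.
Lemma oext_None x : oext le x None.
Proof. intros a H; discriminate. Qed.
Lemma oext_mo_l x y : oext le (mo f x y) x.
Proof. intros a ->. destruct y; simpl; eauto. Qed.
Lemma oext_mo_r x y : oext le (mo f x y) y.
Proof. intros a ->. destruct x; simpl; eauto. Qed.
Lemma ext_refl G : ext le G G.
Proof. intro; apply oext_refl. Qed.
Lemma ext_trans G1 G2 G3 : ext le G1 G2 -> ext le G2 G3 -> ext le G1 G3.
Proof. intros H1 H2 i; eapply oext_trans; eauto. Qed.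
Lemma ext_merge_l G1 G2 : ext le (merge f G1 G2) G1.
Proof. intro i; rewrite nth_merge; apply oext_mo_l. Qed.
Lemma ext_merge_r G1 G2 : ext le (merge f G1 G2) G2.
Proof. intro i; rewrite nth_merge; apply oext_mo_r. Qed.
Lemma ext_cons x' x G' G : oext le x' x -> ext le G' G -> ext le (x' :: G') (x :: G).
Proof. intros H1 H2 [|i]; simpl; auto. Qed.
Lemma ext_ins k o' o G' G : oext le o' o -> ext le G' G -> ext le (ins k o' G') (ins k o G).
Proof. intros H1 H2 i; rewrite !nth_ins. destruct (i <? k), (i =? k); auto. Qed.
Lemma ext_upd k o' o G' G : oext le o' o -> ext le G' G -> ext le (upd k o' G') (upd k o G).
Proof. intros H1 H2 i; rewrite !nth_upd. destruct (i =? k); auto. Qed.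
Lemma ext_upd1 k o' G : oext le o' (nth k G None) -> ext le (upd k o' G) G.
Proof. intros H1 i; rewrite !nth_upd. destruct (i =? k) eqn:E; [apply Nat.eqb_eq in E; subst; auto|apply oext_refl]. Qed.
Lemma ext_merge G G1 G2 : ext le G1 G -> ext le G2 G -> ext le (merge f G1 G2) G.
Proof. intros; eapply ext_trans; [apply ext_merge_l|]; auto. Qed.
End Ext.

Definition extG := ext leD.
Definition extD := ext leC.
Lemma leD_refl' : forall a, leD a a. Proof. exact leD_refl. Qed.
Lemma leC_refl' : forall a, leC a a. Proof. exact leC_refl. Qed.
Lemma extG_refl G : extG G G. Proof. apply ext_refl, leD_refl. Qed.
Lemma extD_refl G : extD G G. Proof. apply ext_refl, leC_refl. Qed.
Lemma extG_trans a b c : extG a b -> extG b c -> extG a c.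
Proof. apply ext_trans, leD_trans. Qed.
Lemma extD_trans a b c : extD a b -> extD b c -> extD a c.
Proof. apply ext_trans, leC_trans. Qed.

Lemma weaken : forall G M d D, typ G M d D ->
  forall G' D', extG G' G -> extD D' D -> typ G' M d D'.
Proof.
  induction 1; intros G' D' HG HD.
  - destruct (HG x d H) as [d' [E L]]. eapply t_le; [apply t_ax; eauto|auto].
  - apply t_abs. apply IHtyp; auto. apply ext_cons; auto. apply oext_refl, leD_refl.
  - eapply t_app; eauto.
  - destruct (HD b k' H) as [k'' [E L]]. eapply t_mu1; eauto.
    eapply t_le. apply IHtyp; auto. apply ext_cons; auto. apply oext_refl, leC_refl.
    apply leD_arr; auto.
  - apply t_mu2, IHtyp; auto. apply ext_cons; auto. apply oext_refl, leC_refl.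
  - eapply t_le; eauto.
  - apply t_and; eauto.
Qed.

Lemma typ_ind_top (P : basis -> term -> tD -> nctx -> Prop) :
  (forall G M d d' D, P G M d D -> leD d d' -> P G M d' D) ->
  (forall G M d d' D, P G M d D -> P G M d' D -> P G M (DAnd d d') D) ->
  (forall G D x d, nth x G None = Some d -> P G (Var x) d D) ->
  (forall G D M d ko, typ (Some d :: G) M (arr ko) D -> P G (Lam M) (KArr (times d ko)) D) ->
  (forall G D M N d ko, typ G M (KArr (times d ko)) D -> typ G N d D -> P G (App M N) (arr ko) D) ->
  (forall G D M b k k', nth b D None = Some k' -> typ G M (KArr k') (Some k :: D) ->
      P G (Mu (S b) M) (KArr k) D) ->
  (forall G D M k, typ G M (KArr k) (Some k :: D) -> P G (Mu 0 M) (KArr k) D) ->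
  forall G M d D, typ G M d D -> P G M d D.
Proof. intros H1 H2 H3 H4 H5 H6 H7; induction 1; eauto. Qed.

Fixpoint hasK (k : tC) (d : tD) : Prop :=
  match d with
  | KArr k0 => leC k k0
  | DAnd a b => hasK k a \/ hasK k b
  | _ => False end.

Lemma hasK_le : forall d e, leD d e -> forall k, hasK k e -> hasK k d.
Proof.
  induction 1; simpl; intros; eauto; try tauto.
  destruct H1; eauto.
  eapply leC_trans; eauto.
Qed.

Lemma gen_app : forall G T d D, typ G T d D -> forall A B, T = App A B -> forall k, hasK k d ->
  exists d0 k0, typ G A (KArr (Pair d0 k0)) D /\ typ G B d0 D /\ leC k k0.
Proof.
  induction 1; intros A B E k0 Hk; try discriminate.
  - injection E; intros; subst. destruct ko; simpl in Hk; [|tauto]. eauto.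
  - eapply IHtyp; eauto. eapply hasK_le; eauto.
  - destruct Hk; eauto.
Qed.

Lemma gen_app_K G A B k D : typ G (App A B) (KArr k) D ->
  exists d0, typ G A (KArr (Pair d0 k)) D /\ typ G B d0 D.
Proof.
  intro H. destruct (gen_app _ _ _ _ H A B eq_refl k (leC_refl k)) as [d0 [k0 [H1 [H2 H3]]]].
  exists d0; split; auto. eapply t_le; eauto. apply leD_arr, leC_Pair; auto. apply leD_refl.
Qed.

Lemma str_t : forall G T d D, typ G T d D -> forall j N, T = lift_t j N -> typ (del j G) N d D.
Proof.
  induction 1; intros j N0 E.
  - destruct N0; try discriminate. injection E; intros; subst. apply t_ax.
    rewrite nth_del. destruct (n <? j); auto.
  - destruct N0; try discriminate. injection E; intros; subst. apply t_abs.
    apply (IHtyp (S j)); auto.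
  - destruct N0; try discriminate. injection E; intros; subst. eapply t_app; eauto.
  - destruct N0; try discriminate. injection E; intros; subst. eapply t_mu1; eauto.
  - destruct N0; try discriminate. injection E; intros; subst. eapply t_mu2; eauto.
  - eapply t_le; eauto.
  - apply t_and; eauto.
Qed.

Lemma str_n : forall G T d D, typ G T d D -> forall j N, T = lift_n j N -> typ G N d (del j D).
Proof.
  induction 1; intros j N0 E.
  - destruct N0; try discriminate. injection E; intros; subst. apply t_ax; auto.
  - destruct N0; try discriminate. injection E; intros; subst. apply t_abs; eauto.
  - destruct N0; try discriminate. injection E; intros; subst. eapply t_app; eauto.
  - destruct N0; try discriminate. injection E; intros E1 E2; subst.
    specialize (IHtyp (S j) N0 eq_refl). simpl in IHtyp.
    destruct n as [|b1]; [simpl in E2; discriminate|].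
    change (S b1 <? S j) with (b1 <? j) in E2.
    destruct (b1 <? j) eqn:Hb; injection E2; intros; subst.
    + eapply t_mu1; eauto. rewrite nth_del, Hb; auto.
    + eapply t_mu1; eauto. rewrite nth_del, Hb; auto.
  - destruct N0; try discriminate. injection E; intros E1 E2; subst.
    destruct n; [|destruct (S n <? S j); discriminate].
    apply t_mu2. apply (IHtyp (S j)); auto.
  - eapply t_le; eauto.
  - apply t_and; eauto.
Qed.

Lemma oG_mo_l x y : oext leD (mo DAnd x y) x. Proof. apply oext_mo_l; [exact leD_refl|exact leD_andl]. Qed.
Lemma oG_mo_r x y : oext leD (mo DAnd x y) y. Proof. apply oext_mo_r; [exact leD_refl|exact leD_andr]. Qed.
Lemma oC_mo_l x y : oext leC (mo CAnd x y) x. Proof. apply oext_mo_l; [exact leC_refl|exact leC_andl]. Qed.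
Lemma oC_mo_r x y : oext leC (mo CAnd x y) y. Proof. apply oext_mo_r; [exact leC_refl|exact leC_andr]. Qed.
Lemma oG_refl x : oext leD x x. Proof. apply oext_refl, leD_refl. Qed.
Lemma oC_refl x : oext leC x x. Proof. apply oext_refl, leC_refl. Qed.
Lemma eG_merge_l a b : extG (merge DAnd a b) a. Proof. intro i; rewrite nth_merge; apply oG_mo_l. Qed.
Lemma eG_merge_r a b : extG (merge DAnd a b) b. Proof. intro i; rewrite nth_merge; apply oG_mo_r. Qed.
Lemma eD_merge_l a b : extD (merge CAnd a b) a. Proof. intro i; rewrite nth_merge; apply oC_mo_l. Qed.
Lemma eD_merge_r a b : extD (merge CAnd a b) b. Proof. intro i; rewrite nth_merge; apply oC_mo_r. Qed.
Lemma eG_merge G a b : extG a G -> extG b G -> extG (merge DAnd a b) G.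
Proof. intros; eapply extG_trans; [apply eG_merge_l|]; auto. Qed.
Lemma eD_merge G a b : extD a G -> extD b G -> extD (merge CAnd a b) G.
Proof. intros; eapply extD_trans; [apply eD_merge_l|]; auto. Qed.

Definition SI M k N G d D := exists o, typ (ins k o G) M d D /\ (forall dN, o = Some dN -> typ G N dN D).

Lemma mo_typ G N D o1 o2 : (forall dN, o1 = Some dN -> typ G N dN D) ->
  (forall dN, o2 = Some dN -> typ G N dN D) -> forall dN, mo DAnd o1 o2 = Some dN -> typ G N dN D.
Proof.
  destruct o1, o2; simpl; intros H1 H2 dN E; inversion E; subst; auto. apply t_and; auto.
Qed.

Lemma si_le M k N G d d' D : SI M k N G d D -> leD d d' -> SI M k N G d' D.
Proof. intros [o [H1 H2]] L. exists o; split; auto. eapply t_le; eauto. Qed.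

Lemma si_and M k N G d d' D : SI M k N G d D -> SI M k N G d' D -> SI M k N G (DAnd d d') D.
Proof.
  intros [o1 [H1 H2]] [o2 [H3 H4]]. exists (mo DAnd o1 o2); split.
  - apply t_and; [eapply weaken; [exact H1| |apply extD_refl]|eapply weaken; [exact H3| |apply extD_refl]].
    + apply ext_ins; [apply oG_mo_l|apply extG_refl].
    + apply ext_ins; [apply oG_mo_r|apply extG_refl].
  - apply mo_typ; auto.
Qed.

Ltac top_ind H P :=
  refine (typ_ind_top P _ _ _ _ _ _ _ _ _ _ _ H _ _ eq_refl);
  [ intros ? ? ? ? ? J1 Hle ? ? E; eapply si_le; eauto
  | intros ? ? ? ? ? J1 J2 ? ? E; eapply si_and; eauto
  | intros ? ? ? ? ? ? ? E
  | intros ? ? ? ? ? ? ? ? E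
  | intros ? ? ? ? ? ? ? ? ? ? E
  | intros ? ? ? ? ? ? ? ? ? ? E
  | intros ? ? ? ? ? ? ? E ].

Lemma subst_inv : forall M k N G d D, typ G (subst_t k N M) d D -> SI M k N G d D.
Proof.
  induction M as [n|M IH|M1 IH1 M2 IH2|b M IH]; intros k N G d D H.
  - destruct (n =? k) eqn:Ek.
    + apply Nat.eqb_eq in Ek; subst. simpl in H. rewrite Nat.eqb_refl in H.
      exists (Some d); split; [|intros dN E; inversion E; subst; auto].
      apply t_ax. rewrite nth_ins, Nat.ltb_irrefl, Nat.eqb_refl; auto.
    + revert Ek.
      refine (typ_ind_top (fun G T d D => forall k N, T = subst_t k N (Var n) -> (n =? k) = false -> SI (Var n) k N G d D) _ _ _ _ _ _ _ _ _ _ _ H _ _ eq_refl).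
      * intros ? ? ? ? ? J1 Hle ? ? E Ek; eapply si_le; eauto.
      * intros ? ? ? ? ? IH1 IH2 ? ? E Ek; eapply si_and; eauto.
      * intros ? ? ? ? Hx ? ? E Ek. simpl in E. rewrite Ek in E.
        exists None; split; [|intros; discriminate].
        apply t_ax. rewrite nth_ins. rewrite Ek.
        destruct (n <? k0) eqn:L; injection E; intros; subst; auto.
      * intros ? ? ? ? ? ? ? ? E Ek; simpl in E; rewrite Ek in E; destruct (n <? _); discriminate.
      * intros ? ? ? ? ? ? ? ? ? ? E Ek; simpl in E; rewrite Ek in E; destruct (n <? _); discriminate.
      * intros ? ? ? ? ? ? ? ? ? ? E Ek; simpl in E; rewrite Ek in E; destruct (n <? _); discriminate.
      * intros ? ? ? ? ? ? ? E Ek; simpl in E; rewrite Ek in E; destruct (n <? _); discriminate.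
  - top_ind H (fun G T d D => forall k N, T = subst_t k N (Lam M) -> SI (Lam M) k N G d D); try discriminate.
    simpl in E; injection E; intros; subst.
    match goal with Hy : typ _ (subst_t _ _ M) _ _ |- _ => destruct (IH _ _ _ _ _ Hy) as [o [Q1 Q2]] end.
    exists o; split.
    + apply t_abs. exact Q1.
    + intros dN E0. exact (str_t _ _ _ _ (Q2 dN E0) 0 _ eq_refl).
  - top_ind H (fun G T d D => forall k N, T = subst_t k N (App M1 M2) -> SI (App M1 M2) k N G d D); try discriminate.
    simpl in E; injection E; intros; subst.
    match goal with Hy : typ _ (subst_t _ _ M1) _ _ |- _ => destruct (IH1 _ _ _ _ _ Hy) as [o1 [Q1 Q2]] end.
    match goal with Hy : typ _ (subst_t _ _ M2) _ _ |- _ => destruct (IH2 _ _ _ _ _ Hy) as [o2 [Q3 Q4]] end.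
    exists (mo DAnd o1 o2); split; [|apply mo_typ; auto].
    eapply t_app; [eapply weaken; [exact Q1| |apply extD_refl] | eapply weaken; [exact Q3 | | apply extD_refl]];
      apply ext_ins; (apply oG_mo_l || apply oG_mo_r || apply extG_refl).
  - top_ind H (fun G T d D => forall k N, T = subst_t k N (Mu b M) -> SI (Mu b M) k N G d D); try discriminate.
    + simpl in E; injection E; intros; subst.
      match goal with Hy : typ _ (subst_t _ _ M) _ _ |- _ => destruct (IH _ _ _ _ _ Hy) as [o [Q1 Q2]] end.
      exists o; split; [eapply t_mu1; eauto|].
      intros dN E0. exact (str_n _ _ _ _ (Q2 dN E0) 0 _ eq_refl).
    + simpl in E; injection E; intros; subst.
      match goal with Hy : typ _ (subst_t _ _ M) _ _ |- _ => destruct (IH _ _ _ _ _ Hy) as [o [Q1 Q2]] end.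
      exists o; split; [eapply t_mu2; eauto|].
      intros dN E0. exact (str_n _ _ _ _ (Q2 dN E0) 0 _ eq_refl).
Qed.

Definition ent (o : option tD) (e : option tC) : option tC :=
  match o, e with Some a, Some k => Some (Pair a k) | _, _ => None end.

Definition SSI M j N G d D := exists o,
  typ G M d (upd j (ent o (nth j D None)) D) /\ (forall dN, o = Some dN -> typ G N dN D).

Lemma ent_mo_l o1 o2 e : oext leC (ent (mo DAnd o1 o2) e) (ent o1 e).
Proof.
  destruct o1, o2, e; simpl; intros a E; inversion E; subst; eexists; split; eauto;
    try apply leC_refl. apply leC_Pair; [apply leD_andl|apply leC_refl].
Qed.
Lemma ent_mo_r o1 o2 e : oext leC (ent (mo DAnd o1 o2) e) (ent o2 e).
Proof.
  destruct o1, o2, e; simpl; intros a E; inversion E; subst; eexists; split; eauto;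
    try apply leC_refl. apply leC_Pair; [apply leD_andr|apply leC_refl].
Qed.

Lemma ssi_le M k N G d d' D : SSI M k N G d D -> leD d d' -> SSI M k N G d' D.
Proof. intros [o [H1 H2]] L. exists o; split; auto. eapply t_le; eauto. Qed.

Lemma ssi_and M k N G d d' D : SSI M k N G d D -> SSI M k N G d' D -> SSI M k N G (DAnd d d') D.
Proof.
  intros [o1 [H1 H2]] [o2 [H3 H4]]. exists (mo DAnd o1 o2); split.
  - apply t_and; [eapply weaken; [exact H1|apply extG_refl|]|eapply weaken; [exact H3|apply extG_refl|]];
      apply ext_upd; (apply ent_mo_l || apply ent_mo_r || apply extD_refl).
  - apply mo_typ; auto.
Qed.

Ltac top_ind2 H P :=
  refine (typ_ind_top P _ _ _ _ _ _ _ _ _ _ _ H _ _ eq_refl);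
  [ intros ? ? ? ? ? J1 Hle ? ? E; eapply ssi_le; eauto
  | intros ? ? ? ? ? J1 J2 ? ? E; eapply ssi_and; eauto
  | intros ? ? ? ? ? ? ? E
  | intros ? ? ? ? ? ? ? ? E
  | intros ? ? ? ? ? ? ? ? ? ? E
  | intros ? ? ? ? ? ? ? ? ? ? E
  | intros ? ? ? ? ? ? ? E ].

Lemma ssubst_inv : forall M j N G d D, typ G (ssubst j N M) d D -> SSI M j N G d D.
Proof.
  induction M as [n|M IH|M1 IH1 M2 IH2|b M IH]; intros j N G d D H.
  - top_ind2 H (fun G T d D => forall j N, T = ssubst j N (Var n) -> SSI (Var n) j N G d D); try discriminate.
    simpl in E; injection E; intros; subst.
    exists None; split; [apply t_ax; auto|intros; discriminate].
  - top_ind2 H (fun G T d D => forall k N, T = ssubst k N (Lam M) -> SSI (Lam M) k N G d D); try discriminate.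
    simpl in E; injection E; intros; subst.
    match goal with Hy : typ _ (ssubst _ _ M) _ _ |- _ => destruct (IH _ _ _ _ _ Hy) as [o [Q1 Q2]] end.
    exists o; split.
    + apply t_abs. exact Q1.
    + intros dN E0. exact (str_t _ _ _ _ (Q2 dN E0) 0 _ eq_refl).
  - top_ind2 H (fun G T d D => forall k N, T = ssubst k N (App M1 M2) -> SSI (App M1 M2) k N G d D); try discriminate.
    simpl in E; injection E; intros; subst.
    match goal with Hy : typ _ (ssubst _ _ M1) _ _ |- _ => destruct (IH1 _ _ _ _ _ Hy) as [o1 [Q1 Q2]] end.
    match goal with Hy : typ _ (ssubst _ _ M2) _ _ |- _ => destruct (IH2 _ _ _ _ _ Hy) as [o2 [Q3 Q4]] end.
    exists (mo DAnd o1 o2); split; [|apply mo_typ; auto].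
    eapply t_app; [eapply weaken; [exact Q1|apply extG_refl| ] | eapply weaken; [exact Q3 |apply extG_refl| ]];
      apply ext_upd; (apply ent_mo_l || apply ent_mo_r || apply extD_refl).
  - refine (typ_ind_top (fun G T d D => forall k N, T = ssubst k N (Mu b M) -> SSI (Mu b M) k N G d D) _ _ _ _ _ _ _ _ _ _ _ H _ _ eq_refl).
    1: intros ? ? ? ? ? J1 Hle ? ? E; eapply ssi_le; eauto.
    1: intros ? ? ? ? ? J1 J2 ? ? E; eapply ssi_and; eauto.
    1-3: intros; match goal with E : _ = ssubst _ _ _ |- _ => simpl in E; destruct (_ =? _); discriminate end.
    + intros G0 D0 M0 b1 kk k' Hn Hty k0 N0 E.
      simpl in E. destruct (b =? S k0) eqn:Eb.
      * apply Nat.eqb_eq in Eb; subst b. injection E; intros E1 E2; subst.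
        match goal with Hy : typ _ (App _ _) _ _ |- _ => destruct (gen_app_K _ _ _ _ _ Hy) as [d0 [Q1 Q2]] end.
        destruct (IH _ _ _ _ _ Q1) as [o' [Q3 Q4]].
        simpl in Q3.
        unfold SSI; rewrite Hn in Q3 |- *.
        set (dNew := match o' with Some a => DAnd d0 a | None => d0 end).
        exists (Some dNew); split.
        -- simpl. eapply t_mu1. rewrite nth_upd, Nat.eqb_refl; reflexivity.
           eapply t_le; [eapply weaken; [exact Q3|apply extG_refl|]|].
           ++ apply ext_cons; [apply oC_refl|]. apply ext_upd; [|apply extD_refl].
              unfold dNew; destruct o'; simpl; intros a Ea; inversion Ea; subst; eexists; split; eauto.
              apply leC_Pair; [apply leD_andr|apply leC_refl].
           ++ apply leD_arr, leC_Pair; [|apply leC_refl]. unfold dNew; destruct o'; [apply leD_andl|apply leD_refl].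
        -- intros dN Ed; inversion Ed; subst. unfold dNew; destruct o'.
           ++ apply t_and. exact (str_n _ _ _ _ Q2 0 _ eq_refl).
              exact (str_n _ _ _ _ (Q4 _ eq_refl) 0 _ eq_refl).
           ++ exact (str_n _ _ _ _ Q2 0 _ eq_refl).
      * injection E; intros E1 E2; subst.
        match goal with Hy : typ _ (ssubst _ _ M) _ _ |- _ => destruct (IH _ _ _ _ _ Hy) as [o [Q1 Q2]] end.
        exists o; split.
        -- simpl in Q1. eapply t_mu1; [|exact Q1]. rewrite nth_upd.
           change (S b1 =? S k0) with (b1 =? k0) in Eb. rewrite Eb. assumption.
        -- intros dN E0. exact (str_n _ _ _ _ (Q2 dN E0) 0 _ eq_refl).
    + intros G0 D0 M0 kk Hty k0 N0 E.
      simpl in E. destruct (b =? S k0) eqn:Eb.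
      * injection E; intros; subst. discriminate.
      * injection E; intros E1 E2; subst.
        match goal with Hy : typ _ (ssubst _ _ M) _ _ |- _ => destruct (IH _ _ _ _ _ Hy) as [o [Q1 Q2]] end.
        exists o; split; [simpl in Q1; eapply t_mu2; exact Q1|].
        intros dN E0. exact (str_n _ _ _ _ (Q2 dN E0) 0 _ eq_refl).
Qed.

Definition EXP G X d D := exists G' D', extG G' G /\ extD D' D /\ typ G' X d D'.

Lemma exp_le G X d d' D : EXP G X d D -> leD d d' -> EXP G X d' D.
Proof. intros [G' [D' [H1 [H2 H3]]]] L. exists G', D'; repeat split; auto. eapply t_le; eauto. Qed.

Lemma exp_and G X d d' D : EXP G X d D -> EXP G X d' D -> EXP G X (DAnd d d') D.
Proof.
  intros [G1 [D1 [H1 [H2 H3]]]] [G2 [D2 [H4 [H5 H6]]]].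
  exists (merge DAnd G1 G2), (merge CAnd D1 D2); repeat split.
  - apply eG_merge; auto.
  - apply eD_merge; auto.
  - apply t_and; eapply weaken; eauto using eG_merge_l, eG_merge_r, eD_merge_l, eD_merge_r.
Qed.

Lemma exp_of G X d D : typ G X d D -> EXP G X d D.
Proof. intros; exists G, D; repeat split; auto using extG_refl, extD_refl. Qed.

Definition NTyp N := exists G2 D2 dN, typ G2 N dN D2.

Lemma beta_arr M N G ko D : typ G (subst_t 0 N M) (arr ko) D -> NTyp N ->
  EXP G (App (Lam M) N) (arr ko) D.
Proof.
  intros H [G2 [D2 [dN HN]]].
  destruct (subst_inv _ _ _ _ _ _ H) as [o [Q1 Q2]]. simpl in Q1.
  destruct o as [dx|].
  - apply exp_of. eapply t_app; [apply t_abs; exact Q1| apply Q2; auto].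
  - exists (merge DAnd G G2), (merge CAnd D D2); repeat split.
    + apply eG_merge_l.
    + apply eD_merge_l.
    + eapply t_app; [apply t_abs|].
      * eapply weaken; [exact Q1| |apply eD_merge_l].
        apply ext_cons; [apply oext_None|apply eG_merge_l].
      * eapply weaken; [exact HN|apply eG_merge_r|apply eD_merge_r].
Qed.

Lemma beta_exp M N G d D : typ G (subst_t 0 N M) d D -> NTyp N ->
  EXP G (App (Lam M) N) d D.
Proof.
  revert G D; induction d; intros G D H HN.
  - eapply exp_le; [apply (beta_arr _ _ _ None); auto|apply leD_om_nu].
    eapply t_le; eauto. apply leD_nu_om.
  - apply (beta_arr _ _ _ None); auto.
  - apply (beta_arr _ _ _ (Some t)); auto.
  - apply exp_and; [apply IHd1|apply IHd2]; auto; eapply t_le; eauto; [apply leD_andl|apply leD_andr].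
Qed.

Definition mured b P N : term :=
  let N' := lift_n 0 N in
  let P' := ssubst 0 N' P in
  if b =? 0 then Mu b (App P' N') else Mu b P'.

Lemma mu_exp b P N G d D : typ G (mured b P N) d D -> NTyp N ->
  EXP G (App (Mu b P) N) d D.
Proof.
  intros H [G2 [D2 [dN HN]]].
  refine (typ_ind_top (fun G T d D => T = mured b P N -> EXP G (App (Mu b P) N) d D) _ _ _ _ _ _ _ _ _ _ _ H eq_refl).
  - intros; eapply exp_le; eauto.
  - intros; eapply exp_and; eauto.
  - unfold mured; intros; destruct (b =? 0); discriminate.
  - unfold mured; intros; destruct (b =? 0); discriminate.
  - unfold mured; intros; destruct (b =? 0); discriminate.
  - intros G0 D0 M0 b0 k k' Hn Hty E. unfold mured in E. destruct b as [|b1]; simpl in E; [discriminate|].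
    injection E; intros; subst.
    destruct (ssubst_inv _ _ _ _ _ _ Hty) as [o [Q1 Q2]]. simpl in Q1.
    destruct o as [dx|].
    + apply exp_of. eapply t_app with (ko := Some k).
      * change (KArr (times dx (Some k))) with (KArr (Pair dx k)). eapply t_mu1; eauto.
      * exact (str_n _ _ _ _ (Q2 _ eq_refl) 0 _ eq_refl).
    + exists (merge DAnd G0 G2), (merge CAnd D0 D2); repeat split.
      * apply eG_merge_l.
      * apply eD_merge_l.
      * eapply t_app with (ko := Some k); [|eapply weaken; [exact HN|apply eG_merge_r|apply eD_merge_r]].
        change (KArr (times dN (Some k))) with (KArr (Pair dN k)).
        eapply weaken; [|apply eG_merge_l|apply eD_merge_l].
        eapply t_mu1; eauto.
        eapply weaken; [exact Q1|apply extG_refl|].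
        apply ext_cons; [apply oext_None|apply extD_refl].
  - intros G0 D0 M0 k Hty E. unfold mured in E. destruct b as [|b1]; simpl in E; [|discriminate].
    injection E; intros; subst.
    destruct (gen_app_K _ _ _ _ _ Hty) as [d0 [Q1 Q2]].
    destruct (ssubst_inv _ _ _ _ _ _ Q1) as [o [Q3 Q4]]. simpl in Q3.
    set (dNew := match o with Some a => DAnd d0 a | None => d0 end).
    apply exp_of. eapply t_app with (d := dNew) (ko := Some k).
    + change (KArr (times dNew (Some k))) with (KArr (Pair dNew k)). apply t_mu2.
      eapply t_le; [eapply weaken; [exact Q3|apply extG_refl|]|].
      * apply ext_cons; [|apply extD_refl].
        unfold dNew; destruct o; simpl; intros a Ea; inversion Ea; subst; eexists; split; eauto.
        apply leC_Pair; [apply leD_andr|apply leC_refl].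
      * apply leD_arr, leC_Pair; [|apply leC_refl]. unfold dNew; destruct o; [apply leD_andl|apply leD_refl].
    + unfold dNew; destruct o.
      * apply t_and. exact (str_n _ _ _ _ Q2 0 _ eq_refl).
        exact (str_n _ _ _ _ (Q4 _ eq_refl) 0 _ eq_refl).
      * exact (str_n _ _ _ _ Q2 0 _ eq_refl).
Qed.

Inductive hstep : term -> term -> term -> Prop :=
| hs_beta M N : hstep (App (Lam M) N) (subst_t 0 N M) N
| hs_mu b P N : hstep (App (Mu b P) N) (mured b P N) N
| hs_app A A' B N : hstep A A' N -> hstep (App A B) (App A' B) N.

Lemma hstep_step X R N : hstep X R N -> step X R.
Proof. induction 1; [apply st_beta|apply st_mu|apply st_appl; auto]. Qed.

Lemma hstep_exp X R N : hstep X R N -> NTyp N -> forall G d D, typ G R d D -> EXP G X d D.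
Proof.
  induction 1 as [| |A A' B N Hs IHhstep]; intros HN G d D H.
  - apply beta_exp; auto.
  - apply mu_exp; auto.
  - refine (typ_ind_top (fun G T d D => T = App A' B -> EXP G (App A B) d D) _ _ _ _ _ _ _ _ _ _ _ H eq_refl).
    + intros; eapply exp_le; eauto.
    + intros; eapply exp_and; eauto.
    + intros; discriminate.
    + intros; discriminate.
    + intros G0 D0 M0 N0 d0 ko H1 H2 E. injection E; intros; subst.
      destruct (IHhstep HN _ _ _ H1) as [G' [D' [E1 [E2 E3]]]].
      exists G', D'; repeat split; auto.
      eapply t_app; [exact E3|eapply weaken; eauto].
    + intros; discriminate.
    + intros; discriminate.
Qed.

Definition fstep x y := step y x.
Inductive imm : term -> term -> Prop :=
| imm_lam M : imm M (Lam M)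
| imm_appl A B : imm A (App A B)
| imm_appr A B : imm B (App A B)
| imm_mu b M : imm M (Mu b M).
Definition R' x y := step y x \/ imm x y.

Inductive sub : term -> term -> Prop :=
| sub_refl M : sub M M
| sub_lam y M : sub y M -> sub y (Lam M)
| sub_appl y A B : sub y A -> sub y (App A B)
| sub_appr y A B : sub y B -> sub y (App A B)
| sub_mu y b M : sub y M -> sub y (Mu b M).

Lemma sub_imm z y M : imm z y -> sub y M -> sub z M.
Proof.
  intros Hi Hs; induction Hs.
  - destruct Hi; [apply sub_lam|apply sub_appl|apply sub_appr|apply sub_mu]; apply sub_refl.
  - apply sub_lam; auto.
  - apply sub_appl; auto.
  - apply sub_appr; auto.
  - apply sub_mu; auto.
Qed.

Lemma compat y M z : sub y M -> step y z -> exists M', step M M' /\ sub z M'.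
Proof.
  intros Hs Hst; induction Hs.
  - exists z; split; auto; constructor.
  - destruct (IHHs Hst) as [M' [H1 H2]]. exists (Lam M'); split; [apply st_lam|apply sub_lam]; auto.
  - destruct (IHHs Hst) as [M' [H1 H2]]. exists (App M' B); split; [apply st_appl|apply sub_appl]; auto.
  - destruct (IHHs Hst) as [M' [H1 H2]]. exists (App A M'); split; [apply st_appr|apply sub_appr]; auto.
  - destruct (IHHs Hst) as [M' [H1 H2]]. exists (Mu b M'); split; [apply st_mu_body|apply sub_mu]; auto.
Qed.

Lemma acc_R' : forall M, Acc fstep M -> forall y, sub y M -> Acc R' y.
Proof.
  induction 1 as [M _ IH]. intro y. induction y; intro Hs; constructor; intros z [Hst|Him].
  all: try (destruct (compat _ _ _ Hs Hst) as [M' [H1 H2]]; eapply IH; eauto).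
  all: inversion Him; subst; eauto using sub_imm.
Qed.

Lemma notacc_step M : ~ Acc fstep M -> exists M', step M M' /\ ~ Acc fstep M'.
Proof.
  intro H. apply NNPP. intro H2. apply H. constructor. intros y Hy. apply NNPP; intro H3. apply H2; eauto.
Qed.

Lemma SN_Acc M : SN M -> Acc fstep M.
Proof.
  intro HS. apply NNPP; intro HA. apply HS.
  pose (T := {M | ~ Acc fstep M}).
  assert (F : forall x : T, {y : T | step (proj1_sig x) (proj1_sig y)}).
  { intros [x Hx]. destruct (constructive_indefinite_description _ (notacc_step x Hx)) as [y [Hy1 Hy2]].
    exists (exist _ y Hy2). exact Hy1. }
  exists (fun n => proj1_sig (Nat.iter n (fun x => proj1_sig (F x)) (exist _ M HA : T))).
  split; [reflexivity|]. intro n. simpl. apply (proj2_sig (F _)).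
Qed.

Fixpoint neutral M := match M with Var _ => True | App A _ => neutral A | _ => False end.

Lemma nonneutral_hstep A : forall B, ~ neutral A -> exists R N, hstep (App A B) R N.
Proof.
  induction A; intros B Hn; simpl in Hn.
  - tauto.
  - eexists; eexists; apply hs_beta.
  - destruct (IHA1 A2 Hn) as [R [N Hs]]. eexists; eexists; apply hs_app; eauto.
  - eexists; eexists; apply hs_mu.
Qed.

Lemma hstep_sub X R N : hstep X R N -> clos_trans term R' N X.
Proof.
  induction 1.
  - apply t_step; right; constructor.
  - apply t_step; right; constructor.
  - eapply t_trans; [eauto|]. apply t_step; right; constructor.
Qed.

Definition single (x : nat) (d : tD) : basis := repeat None x ++ [Some d].
Lemma nth_single x d : nth x (single x d) None = Some d.
Proof. induction x; simpl; auto. Qed.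

Lemma ext_head {X} (le : X -> X -> Prop) x L G :
  oext le x (nth 0 G None) -> ext le L (tl G) -> ext le (x :: L) G.
Proof.
  intros H1 H2 [|i]; simpl; auto. specialize (H2 i). destruct G; simpl in *; auto; destruct i; auto.
Qed.

Lemma ext_tl {X} (le : X -> X -> Prop) G : (forall a, le a a) -> ext le (tl G) (tl G).
Proof. intros; apply ext_refl; auto. Qed.

Definition TP M := (exists G D k, typ G M (KArr k) D) /\
  (neutral M -> forall ko, exists G D, typ G M (arr ko) D).

Lemma mu_intro G B k' Dm b : typ G B (KArr k') Dm -> exists D k, typ G (Mu b B) (KArr k) D.
Proof.
  intro H. destruct b as [|b1].
  - set (kk := match nth 0 Dm None with Some a => CAnd a k' | None => k' end).
    exists (tl Dm), kk. apply t_mu2.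
    eapply t_le; [eapply weaken; [exact H|apply extG_refl|]|].
    + apply ext_head; [|apply ext_refl, leC_refl].
      unfold kk; destruct (nth 0 Dm None); intros a E; inversion E; subst; eexists; split; eauto.
      apply leC_andl.
    + apply leD_arr. unfold kk; destruct (nth 0 Dm None); [apply leC_andr|apply leC_refl].
  - set (k0 := match nth 0 Dm None with Some a => a | None => PairO Nu end).
    set (kk := match nth b1 (tl Dm) None with Some a => CAnd a k' | None => k' end).
    exists (upd b1 (Some kk) (tl Dm)), k0. eapply t_mu1.
    + rewrite nth_upd, Nat.eqb_refl; reflexivity.
    + eapply t_le; [eapply weaken; [exact H|apply extG_refl|]|].
      * apply ext_head.
        -- unfold k0; destruct (nth 0 Dm None); intros a E; inversion E; subst; eexists; split; eauto.
           apply leC_refl.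
        -- apply ext_upd1; [apply leC_refl|].
           unfold kk; destruct (nth b1 (tl Dm) None); intros a E; inversion E; subst; eexists; split; eauto.
           apply leC_andl.
      * apply leD_arr. unfold kk; destruct (nth b1 (tl Dm) None); [apply leC_andr|apply leC_refl].
Qed.

Lemma main : forall M, Acc (clos_trans term R') M -> TP M.
Proof.
  induction 1 as [M _ IH].
  assert (IHs : forall y, imm y M -> TP y) by (intros; apply IH; apply t_step; right; auto).
  destruct M as [n|M|A B|b M].
  - assert (Hn : forall ko, exists G D, typ G (Var n) (arr ko) D).
    { intro ko. exists (single n (arr ko)), []. apply t_ax, nth_single. }
    split; [|intros; auto].
    destruct (Hn (Some (PairO Nu))) as [G [D H]]. exists G, D, (PairO Nu); exact H.
  - split; [|simpl; tauto].
    destruct (IHs M (imm_lam M)) as [[G [D [k H]]] _].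
    set (dx := match nth 0 G None with Some a => a | None => Nu end).
    exists (tl G), D, (times dx (Some k)). apply t_abs.
    eapply weaken; [exact H| |apply extD_refl].
    apply ext_head; [|apply ext_refl, leD_refl].
    unfold dx; destruct (nth 0 G None); intros a E; inversion E; subst; eexists; split; eauto; apply leD_refl.
  - destruct (IHs A (imm_appl A B)) as [TA NA].
    destruct (IHs B (imm_appr A B)) as [[GB [DB [kB HB]]] _].
    destruct (classic (neutral A)) as [Hn|Hn].
    + assert (Hneu : forall ko, exists G D, typ G (App A B) (arr ko) D).
      { intro ko. destruct (NA Hn (Some (times (KArr kB) ko))) as [GA [DA HA]].
        exists (merge DAnd GA GB), (merge CAnd DA DB).
        eapply t_app; eapply weaken; eauto using eG_merge_l, eG_merge_r, eD_merge_l, eD_merge_r. }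
      split; [|intros; auto].
      destruct (Hneu (Some (PairO Nu))) as [G [D H]]. exists G, D, (PairO Nu); exact H.
    + split; [|simpl; tauto].
      destruct (nonneutral_hstep A B Hn) as [R [N Hs]].
      destruct (IH R (t_step _ _ _ _ (or_introl (hstep_step _ _ _ Hs)))) as [[GR [DR [kR HR]]] _].
      destruct (IH N (hstep_sub _ _ _ Hs)) as [[GN [DN [kN HN]]] _].
      destruct (hstep_exp _ _ _ Hs (ex_intro _ GN (ex_intro _ DN (ex_intro _ _ HN))) _ _ _ HR)
        as [G' [D' [_ [_ H']]]].
      exists G', D', kR; exact H'.
  - split; [|simpl; tauto].
    destruct (IHs M (imm_mu b M)) as [[G [D [k H]]] _].
    destruct (mu_intro _ _ _ _ b H) as [D' [k' H']]. exists G, D', k'; exact H'.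
Qed.

Theorem mainTheorem2 : forall M : term, SN M ->
  exists (G : basis) (D : nctx) (d : tD), typ G M d D.
Proof.
  intros M HS.
  assert (HA : Acc R' M) by (apply (acc_R' M (SN_Acc M HS)); constructor).
  destruct (main M (Acc_clos_trans _ _ _ HA)) as [[G [D [k H]]] _].
  exists G, D, (KArr k); exact H.
Qed.
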